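(* Let $\mathbf{B},\mathbf{C}$ be structures over a signature $\sigma$ such that $\mathbf{C}$ is a substructure of $\mathbf{B}$ and there exists a retraction $h$ from $\mathbf{B}$ to $\mathbf{C}$. Then for every subset $S\subseteq\mathrm{dom}(\mathbf{B})$ and every structure $\mathbf{D}$ over $\sigma$, $|\mathrm{homs}(\mathbf{B},S,\mathbf{D})|\ge|\mathrm{homs}(\mathbf{C},S\cap\mathrm{dom}(\mathbf{C}),\mathbf{D})|$.
   Context: A structure $\mathbf{A}$ over a signature $\sigma$ (finite set of relation symbols with arities) has a finite universe $\mathrm{dom}(\mathbf{A})$ and relations $R^{\mathbf{A}}\subseteq\mathrm{dom}(\mathbf{A})^{\mathrm{ar}(R)}$. A homomorphism $\mathbf{A}\to\mathbf{D}$ is a map $g:\mathrm{dom}(\mathbf{A})\to\mathrm{dom}(\mathbf{D})$ with $g(\bar t)\in R^{\mathbf{D}}$ for all $\bar t\in R^{\mathbf{A}}$, $R\in\sigma$. $\mathbf{C}$ is a substructure of $\mathbf{B}$ if $\mathrm{dom}(\mathbf{C})\subseteq\mathrm{dom}(\mathbf{B})$ and $R^{\mathbf{C}}\subseteq R^{\mathbf{B}}$ for all $R\in\sigma$. A retraction from $\mathbf{B}$ to a substructure $\mathbf{C}$ is a homomorphism $\mathbf{B}\to\mathbf{C}$ that is the identity on $\mathrm{dom}(\mathbf{C})$. For $S\subseteq\mathrm{dom}(\mathbf{A})$, $\mathrm{homs}(\mathbf{A},S,\mathbf{D})=\{g|_S : g \text{ a homomorphism } \mathbf{A}\to\mathbf{D}\}$.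 *)

(* Defs.v *)
From mathcomp Require Import all_boot.
Set Implicit Arguments. Unset Strict Implicit. Unset Printing Implicit Defensive.

Record signature := Signature { sym : finType; ar : sym -> nat }.

(* A structure over sig whose universe is a (finite) subset [sdom] of an
   ambient finite type T; relations are sets of (ar R)-tuples over T,
   required to consist of tuples of elements of [sdom]. *)
Record structure (sig : signature) (T : finType) := Structure {
  sdom : {set T};
  srel : forall R : sym sig, {set (ar R).-tuple T};
  swf : [forall R : sym sig, forall t in srel R, forall i, tnth t i \in sdom]
}.

(* A homomorphism A -> D, represented as a map defined exactly on dom(A)
   (value None outside dom(A)); g x = Some y means "x is mapped to y". *)
Definition is_hom (sig : signature) (T U : finType)
  (A : structure sig T) (D : structure sig U) (g : {ffun T -> option U}) : bool :=
  [forall x, (x \notin sdom A) ==> (g x == None)] &&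
  [forall x in sdom A, if g x is Some y then y \in sdom D else false] &&
  [forall R : sym sig, forall t in srel A R,
     [exists t' in srel D R, forall i, g (tnth t i) == Some (tnth t' i)]].

Definition substructure (sig : signature) (T : finType)
  (C B : structure sig T) : Prop :=
  sdom C \subset sdom B /\ forall R, srel C R \subset srel B R.

Definition retraction (sig : signature) (T : finType)
  (B C : structure sig T) (h : {ffun T -> option T}) : Prop :=
  is_hom B C h /\ forall x, x \in sdom C -> h x = Some x.

Definition restrict (T U : finType) (S : {set T}) (g : {ffun T -> option U})
  : {ffun T -> option U} := [ffun x => if x \in S then g x else None].

Definition homs (sig : signature) (T U : finType)
  (A : structure sig T) (S : {set T}) (D : structure sig U)
  : {set {ffun T -> option U}} :=
  [set f | [exists g, is_hom A D g && (f == restrict S g)]].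

(* Main.v *)
Require Import Defs.
From mathcomp Require Import all_boot.

Lemma comp_hom {sig : signature} {T U : finType} {B C : structure sig T}
  {D : structure sig U} {h : {ffun T -> option T}} {g : {ffun T -> option U}} :
  is_hom B C h -> is_hom C D g ->
  is_hom B D [ffun x => if h x is Some y then g y else None].
Proof.
move=> /andP[/andP[/forallP h1 /forall_inP h2] /forallP h3].
move=> /andP[/andP[/forallP g1 /forall_inP g2] /forallP g3].
apply/andP; split; first (apply/andP; split).
- apply/forallP => x; apply/implyP => xB; rewrite ffunE.
  by move: (h1 x); rewrite xB /= => /eqP ->.
- apply/forall_inP => x xB; rewrite ffunE.
  move: (h2 x xB); case: (h x) => // y yC.
- apply/forallP => R; apply/forall_inP => t tB.
  move: (h3 R) => /forall_inP /(_ t tB) /exists_inP [t' t'C /forallP Ht'].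
  move: (g3 R) => /forall_inP /(_ t' t'C) /exists_inP [t'' t''D /forallP Ht''].
  apply/exists_inP; exists t'' => //; apply/forallP => i.
  by rewrite ffunE (eqP (Ht' i)).
Qed.

Theorem lemma5p4 (sig : signature) (T : finType) (B C : structure sig T)
  (h : {ffun T -> option T}) :
  substructure C B -> retraction B C h ->
  forall (S : {set T}), S \subset sdom B ->
  forall (U : finType) (D : structure sig U),
  #|homs B S D| >= #|homs C (S :&: sdom C) D|.
Proof.
move=> _ [hh hid] S _ U D.
apply: leq_trans (leq_imset_card (restrict (S :&: sdom C)) (homs B S D)).
apply: subset_leq_card; apply/subsetP => f.
rewrite inE => /existsP [g /andP [gh /eqP ->]].
set g' := [ffun x => if h x is Some y then g y else None].
apply/imsetP; exists (restrict S g').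
  rewrite inE; apply/existsP; exists g'; rewrite eqxx andbT.
  by move: (comp_hom hh gh).
apply/ffunP => x; rewrite !ffunE inE.
case: (boolP (x \in S)) => //= xS; case: (boolP (x \in sdom C)) => //= xC.
by rewrite hid.
Qed.
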